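(* Let $q$ be odd and $u\in\mathbf{SL}_n(q)$ unipotent. Assume either (a) $n=4$ and $u$ has type $(2,2)$, or (b) $n=3$ and $u$ has type $(2,1)$. Then the conjugacy class $\mathcal{O}_u$ in $\mathbf{SL}_n(q)$ is of type D.
   Context: Unipotent type = sizes of Jordan blocks. Conjugacy classes are racks with $x\triangleright y=xyx^{-1}$. A subrack $Y$ is decomposable if $Y=R\sqcup S$ with nonempty subracks $R,S$, $Y\triangleright R=R$, $Y\triangleright S=S$. Type D: a decomposable subrack $R\sqcup S$ with $r\in R,s\in S$ and $r\triangleright(s\triangleright(r\triangleright s))\neq s$. *)

(* Defs.v *)
From HB Require Import structures.
From mathcomp Require Import all_boot all_order all_algebra all_fingroup.
Set Implicit Arguments. Unset Strict Implicit. Unset Printing Implicit Defensive.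
Import GRing.Theory.

Local Open Scope group_scope.

Definition rtr (gT : finGroupType) (x y : gT) : gT := x * y * x^-1.

Definition rtr_set (gT : finGroupType) (Y R : {set gT}) : {set gT} :=
  [set rtr y r | y in Y, r in R].

Definition subrack (gT : finGroupType) (Y : {set gT}) : Prop :=
  forall x y, x \in Y -> y \in Y -> rtr x y \in Y.

Definition typeD (gT : finGroupType) (O : {set gT}) : Prop :=
  exists R S : {set gT},
    R != set0 /\ S != set0 /\ [disjoint R & S] /\ R :|: S \subset O /\
    subrack (R :|: S) /\ subrack R /\ subrack S /\
    rtr_set (R :|: S) R = R /\ rtr_set (R :|: S) S = S /\
    exists r s, r \in R /\ s \in S /\ rtr r (rtr s (rtr r s)) != s.

Definition SL (n : nat) (F : finFieldType) : {set {'GL_n[F]}} :=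
  [set g : {'GL_n[F]} | (\det (GLval g) == 1)%R].

Local Open Scope ring_scope.

Definition block_ends (lam : seq nat) : seq nat :=
  [seq sumn (take k lam) | k <- iota 1 (size lam)].

(* The unipotent Jordan matrix of type lam (blocks in the order of lam):
   1 on the diagonal, 1 at (i, i+1) unless i+1 starts a new block. *)
Definition unip_jordan (F : fieldType) (m : nat) (lam : seq nat) : 'M[F]_m :=
  \matrix_(i < m, j < m)
    (if i == j then 1
     else if (nat_of_ord j == (nat_of_ord i).+1) && (nat_of_ord j \notin block_ends lam)
          then 1 else 0).

Definition unip_type (n : nat) (F : finFieldType) (u : {'GL_n[F]}) (lam : seq nat) : Prop :=
  [/\ all (fun k => 0 < k)%N lam, sumn lam = n &
      exists g : {'GL_n[F]}, GLval (g * u * g^-1)%g = unip_jordan F n.-1.+1 lam].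

(* Main.v *)
Require Import Defs.
From HB Require Import structures.
From mathcomp Require Import all_boot all_order all_algebra all_fingroup all_field.
From mathcomp Require Import zify.
Set Implicit Arguments. Unset Strict Implicit. Unset Printing Implicit Defensive.
Import GRing.Theory.
Local Open Scope group_scope.
Lemma rtrE (gT : finGroupType) (x y : gT) : rtr x y = y ^ x^-1.
Proof. by rewrite /rtr /conjg invgK mulgA. Qed.

Section Key.
Variables (gT : finGroupType) (G K : {group gT}) (T : eqType) (f : gT -> T) (u s : gT).
Hypotheses (uG : u \in G) (fJ : forall x y, x \in K -> y \in K -> f (x ^ y) = f x)
  (uK : u \in K) (sK : s \in K) (sO : s \in u ^: G) (fus : f u != f s)
  (a0 b0 c : gT) (ua : u = a0 ^ c) (sb : s = b0 ^ c) (rs0 : rtr a0 (rtr b0 (rtr a0 b0)) != b0).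

Lemma rtrJ (a' b' g : gT) : rtr (a' ^ g) (b' ^ g) = (rtr a' b') ^ g.
Proof. by rewrite /rtr !conjMg conjVg. Qed.

Lemma rs : rtr u (rtr s (rtr u s)) != s.
Proof. by rewrite ua sb !rtrJ (inj_eq (@conjg_inj _ c)). Qed.

Let P (a : gT) := [set x in u ^: G | (x \in K) && (f x == f a)].

Lemma P_conj a x y : x \in G -> x \in K -> y \in P a -> y ^ x \in P a.
Proof.
move=> xG xK; rewrite !inE => /andP[yO /andP[yK /eqP fy]].
apply/and3P; split.
- case/imsetP: yO => h hG ->; rewrite -conjgM; apply/imsetP; exists (h * x) => //; exact: groupM.
- exact: groupJ.
- by rewrite fJ // fy.
Qed.

Lemma O_G x : x \in u ^: G -> x \in G.
Proof. by case/imsetP=> h hG ->; exact: groupJ. Qed.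

Lemma P_rtr a x y : x \in P u :|: P s -> y \in P a -> rtr x y \in P a.
Proof.
move=> hx hy; rewrite rtrE.
have [xG xK] : x \in G /\ x \in K.
  by case/setUP: hx; rewrite inE => /and3P[/O_G ? ? _].
by apply: P_conj => //; rewrite groupV.
Qed.

Lemma P_rtr_set a : rtr_set (P u :|: P s) (P a) = P a.
Proof.
apply/setP => y; apply/idP/idP.
- by case/imset2P => x z hx hz ->; exact: P_rtr.
- move=> hy; apply/imset2P; exists u (y ^ u).
  + by rewrite inE; apply/orP; left; rewrite !inE class_refl uK eqxx.
  + by apply: P_conj.
  + by rewrite /rtr /conjg mulgA mulgA mulgV mul1g mulgK.
Qed.

Lemma keyD : typeD (u ^: G).
Proof.
exists (P u), (P s); split; [|split; [|split; [|split; [|split; [|split; [|split; [|split]]]]]]].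
- by apply/set0Pn; exists u; rewrite !inE class_refl uK eqxx.
- by apply/set0Pn; exists s; rewrite !inE sO sK eqxx.
- apply/pred0P => x /=; rewrite !inE; apply/negP => /andP[/and3P[_ _ /eqP a] /and3P[_ _ /eqP b]].
  by move: fus; rewrite -a b eqxx.
- by apply/subsetP => x; rewrite !inE => /orP[] /andP[].
- move=> x y hx; case/setUP => hy; apply/setUP; [left|right]; exact: P_rtr.
- move=> x y hx hy; apply: P_rtr => //; exact: setU11 || (by rewrite inE hx).
- move=> x y hx hy; apply: P_rtr => //; by rewrite inE hx orbT.
- exact: P_rtr_set.
- split; first exact: P_rtr_set.
  exists u, s; split; [|split]; last exact: rs.
  + by rewrite !inE class_refl uK eqxx.
  + by rewrite !inE sO sK eqxx.
Qed.
End Key.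

Lemma key2 (gT : finGroupType) (G K : {group gT}) (T : eqType) (f : gT -> T) (a h g : gT) :
  a ^ g \in G -> (forall x y, x \in K -> y \in K -> f (x ^ y) = f x) ->
  a \in K -> a ^ h \in K -> g^-1 * h * g \in G -> f a != f (a ^ h) ->
  rtr a (rtr (a ^ h) (rtr a (a ^ h))) != a ^ h -> typeD ((a ^ g) ^: G).
Proof.
move=> aG fK aK bK hG fne rne.
apply: (keyD (K := (K :^ g)%G) (f := fun x => f (x ^ g^-1)) (s := (a ^ h) ^ g) aG _ _ _ _ _ erefl erefl rne).
- move=> x y; rewrite /= !mem_conjg => hx hy; by rewrite conjJg fK.
- by rewrite /= memJ_conjg.
- by rewrite /= memJ_conjg.
- apply/imsetP; exists (g^-1 * h * g) => //; by rewrite -!conjgM !mulgA mulgV mul1g.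
- by rewrite /= !conjgK.
Qed.

Lemma SL_group_set n (F : finFieldType) : group_set (SL n F).
Proof.
apply/group_setP; split; first by rewrite inE GL_1E det1.
move=> x y; rewrite !inE GL_MxE det_mulmx => /eqP -> /eqP ->; by rewrite mulr1.
Qed.
Canonical SL_group n F := Group (SL_group_set n F).

Lemma SL_conj n (F : finFieldType) (h g : {'GL_n[F]}) : h \in SL n F -> g^-1 * h * g \in SL n F.
Proof.
rewrite !inE !GL_MxE !det_mulmx GL_VxE det_inv => /eqP ->.
by rewrite mulr1 mulVf // GL_det.
Qed.

Section Unitri.
Variables (F : fieldType) (k : nat).
Local Open Scope ring_scope.
Definition unitri (A : 'M[F]_k) : bool :=
  [forall i : 'I_k, forall j : 'I_k, (j <= i)%N ==> (A i j == (i == j)%:R)].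

Lemma unitriP (A : 'M[F]_k) : reflect (forall i j : 'I_k, (j <= i)%N -> A i j = (i == j)%:R) (unitri A).
Proof.
apply: (iffP forallP) => [H i j ji|H i]; first by move/forallP: (H i) => /(_ j); rewrite ji => /eqP.
by apply/forallP => j; apply/implyP => ji; rewrite H.
Qed.

Lemma unitri_lt (A : 'M[F]_k) (i j : 'I_k) : unitri A -> (j < i)%N -> A i j = 0.
Proof.
move/unitriP=> H ji; rewrite (H i j (ltnW ji)).
have -> : (i == j) = false by apply/negbTE; rewrite neq_ltn ji orbT.
by [].
Qed.

Lemma unitri_diag (A : 'M[F]_k) (i : 'I_k) : unitri A -> A i i = 1.
Proof. by move/unitriP=> H; rewrite (H i i (leqnn _)) eqxx. Qed.

Lemma unitri1 : unitri (1%:M : 'M[F]_k).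
Proof. by apply/unitriP=> i j _; rewrite mxE. Qed.

Lemma unitri_mul (A B : 'M[F]_k) : unitri A -> unitri B -> unitri (A *m B).
Proof.
move=> hA hB; apply/unitriP => i j ji; rewrite mxE (bigD1 i) //= big1.
  rewrite unitri_diag // mul1r addr0; exact: (elimT (unitriP _) hB).
move=> l li; case: (ltngtP l i) => [lt|gt|eq].
- by rewrite unitri_lt // mul0r.
- by rewrite (unitri_lt hB) ?mulr0 // (leq_ltn_trans ji gt).
- by move: li; rewrite (val_inj eq) eqxx.
Qed.

Lemma unitri_sup (A B : 'M[F]_k) (i j : 'I_k) : unitri A -> unitri B -> nat_of_ord j = i.+1 ->
  (A *m B) i j = A i j + B i j.
Proof.
move=> hA hB ej; have ij : i != j.
  apply/eqP => e; move: ej; rewrite -e => /eqP.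
  by rewrite -{1}(addn0 i) -addn1 eqn_add2l.
rewrite mxE (bigD1 i) //= (bigD1 j) /=; last by rewrite eq_sym ij.
rewrite big1 => [|l].
  by rewrite (unitri_diag _ hA) (unitri_diag _ hB) mul1r mulr1 addr0 addrC.
move=> /andP[lj li]; case: (ltngtP l i) => [lt|gt|eq].
- by rewrite unitri_lt // mul0r.
- have jl : (j < l)%N.
    move: li; rewrite -val_eqE /= => li; lia.
  by rewrite (unitri_lt hB jl) mulr0.
- by move: lj; rewrite (val_inj eq) eqxx.
Qed.

End Unitri.

Section Main.
Variables (n : nat) (F : finFieldType).
Local Notation GL := {'GL_n[F]}.

Definition Ugl : {set GL} := [set x : GL | unitri (GLval x)].
Lemma Ugl_group_set : group_set Ugl.
Proof.
apply/group_setP; split; first by rewrite inE GL_1E; exact: unitri1.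
by move=> x y; rewrite !inE GL_MxE; exact: unitri_mul.
Qed.
Canonical Ugl_group := Group Ugl_group_set.
Lemma UglE x : (x \in Ugl_group) = unitri (GLval x).
Proof. by rewrite inE. Qed.

Definition ab (x : GL) : {ffun 'I_n.-1.+1 -> F} :=
  [ffun i : 'I_n.-1.+1 => if (i.+1 < n.-1.+1)%N then GLval x i (inord i.+1) else 0%R].

Lemma abM x y : x \in Ugl_group -> y \in Ugl_group -> forall i, ab (x * y) i = (ab x i + ab y i)%R.
Proof.
rewrite !UglE => hx hy i; rewrite !ffunE; case: ifP => hi; last by rewrite addr0.
by rewrite GL_MxE unitri_sup // inordK.
Qed.

Lemma ab1 i : ab 1 i = 0%R.
Proof.
rewrite ffunE; case: ifP => hi //; rewrite GL_1E mxE.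
have -> : (i == inord i.+1) = false.
  apply/negbTE; rewrite -val_eqE /= inordK //; lia.
by [].
Qed.

Lemma abJ x y : x \in Ugl_group -> y \in Ugl_group -> ab (x ^ y) = ab x.
Proof.
move=> hx hy; apply/ffunP => i; have hyV : y^-1 \in Ugl_group by rewrite groupV.
by rewrite conjgE abM ?groupM // abM // addrA (addrC (ab _ i)) -addrA -abM // mulVg ab1 ?add0r ?addr0.
Qed.


Lemma mainGen (u g h : GL) :
  u \in SL n F -> h \in SL n F ->
  let Jg : GL := g * u * g^-1 in
  Jg \in Ugl_group -> Jg ^ h \in Ugl_group -> ab Jg != ab (Jg ^ h) ->
  rtr Jg (rtr (Jg ^ h) (rtr Jg (Jg ^ h))) != Jg ^ h ->
  typeD (u ^: SL n F).
Proof.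
move=> uSL hSL Jg JU sU fne rne.
have uE : u = Jg ^ g by rewrite /Jg conjgE -!mulgA mulKg mulVg mulg1.
clearbody Jg; subst u.
exact: (key2 (G := SL_group n F) (K := Ugl_group) uSL (@abJ) JU sU (SL_conj _ hSL) fne rne).
Qed.
End Main.
Section NatPart.
Local Open Scope ring_scope.
Lemma two_neq0 (F : finFieldType) : odd #|F| -> (2%:R : F) != 0.
Proof.
move=> oF; apply/negP => /eqP h2.
have pc : (2 \in [pchar F])%N by apply/andP; split => //; apply/eqP.
have := card_pprimeChar pc => /= hc.
move: oF; rewrite hc oddX /= orbF => /eqP h0.
by move: hc (finNzRing_gt1 F); rewrite h0 => /= ->.
Qed.

Section Nat.
Variables (F : fieldType) (m : nat).
Definition Mn (a : nat -> nat -> nat) : 'M[F]_m := \matrix_(i, j) (a i j)%:R.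
Definition nmul (a b : nat -> nat -> nat) := fun i j => sumn [seq a i k * b k j | k <- iota 0 m].
Lemma MnM a b : Mn a *m Mn b = Mn (nmul a b).
Proof.
apply/matrixP=> i j; rewrite !mxE /nmul sumnE big_map natr_sum.
rewrite (_ : iota 0 m = index_iota 0 m); last by rewrite /index_iota subn0.
rewrite big_mkord; apply: eq_bigr => k _.
by rewrite !mxE natrM.
Qed.
Lemma Mn_eq a b : all (fun i => all (fun j => a i j == b i j) (iota 0 m)) (iota 0 m) -> Mn a = Mn b.
Proof.
move/allP=> H; apply/matrixP=> i j; rewrite !mxE.
have Hi : (i : nat) \in iota 0 m by rewrite mem_iota add0n ltn_ord.
have Hj : (j : nat) \in iota 0 m by rewrite mem_iota add0n ltn_ord.
by move/allP: (H i Hi) => /(_ j Hj) /eqP ->.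
Qed.
Lemma MnE a i j : Mn a i j = (a i j)%:R.
Proof. by rewrite mxE. Qed.
End Nat.
End NatPart.

Section C1.
Local Open Scope group_scope.

Lemma rtr_ne (gT : finGroupType) (a b : gT) : a * b * a * b != b * a * b * a -> rtr a (rtr b (rtr a b)) != b.
Proof.
apply: contra => /eqP H; apply/eqP.
have -> : a * b * a * b = (rtr a (rtr b (rtr a b))) * (a * b * a).
  by rewrite /rtr !mulgA !mulgKV.
by rewrite H !mulgA.
Qed.

Lemma GL_conjE n (F : finFieldType) (x h : {'GL_n[F]}) : GLval (x ^ h) = (invmx (GLval h) *m GLval x *m GLval h)%R.
Proof. by rewrite conjgE !GL_MxE GL_VxE mulmxA. Qed.

Definition allchk m (P : nat -> nat -> bool) := all (fun i => all (fun j => P i j) (iota 0 m)) (iota 0 m).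

Lemma unitri_Mn (F : fieldType) m (a : nat -> nat -> nat) :
  allchk m (fun i j => (j <= i) ==> (a i j == (i == j))) -> unitri (Mn F m a).
Proof.
move/allP=> H; apply/unitriP => i j ji; rewrite MnE.
have Hi : (i : nat) \in iota 0 m by rewrite mem_iota add0n ltn_ord.
have Hj : (j : nat) \in iota 0 m by rewrite mem_iota add0n ltn_ord.
move/allP: (H i Hi) => /(_ j Hj); rewrite ji /= => /eqP ->.
by [].
Qed.

Lemma matrix_rtr n (F : finFieldType) (x y : {'GL_n[F]}) X Y : GLval x = X -> GLval y = Y ->
  x * y * x * y = y * x * y * x -> (X *m Y *m X *m Y = Y *m X *m Y *m X)%R.
Proof. by move=> <- <- /(congr1 GLval); rewrite !GL_MxE. Qed.

Lemma caseGen (F : finFieldType) k (u g hP : {'GL_k.+1[F]}) (lam : seq nat) (jn sn pn : nat -> nat -> nat) :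
  odd #|F| -> u \in SL k.+1 F -> hP \in SL k.+1 F ->
  GLval (g * u * g^-1) = unip_jordan F k.+1 lam ->
  unip_jordan F k.+1 lam = Mn F k.+1 jn -> GLval hP = Mn F k.+1 pn ->
  allchk k.+1 (fun i j => nmul k.+1 pn sn i j == nmul k.+1 jn pn i j) ->
  allchk k.+1 (fun i j => (j <= i) ==> (jn i j == (i == j))) ->
  allchk k.+1 (fun i j => (j <= i) ==> (sn i j == (i == j))) ->
  (2 < k.+1)%N -> (jn 0 1 = 1)%N -> (sn 0 1 = 0)%N ->
  (nmul k.+1 (nmul k.+1 (nmul k.+1 jn sn) jn) sn 0 2 = 3)%N ->
  (nmul k.+1 (nmul k.+1 (nmul k.+1 sn jn) sn) jn 0 2 = 1)%N ->
  typeD (u ^: SL k.+1 F).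
Proof.
move=> oF uSL hSL hg hJ hPv cPS cJ cS k2 j01 s01 e3 e1.
have PS : (GLval hP *m Mn F k.+1 sn = Mn F k.+1 jn *m GLval hP)%R.
  by rewrite hPv !MnM; apply: Mn_eq.
have Sv : GLval ((g * u * g^-1) ^ hP) = Mn F k.+1 sn.
  rewrite GL_conjE hg hJ -mulmxA -PS mulmxA mulVmx ?mul1mx //.
  exact: GL_unitmx.
apply: (mainGen (g := g) (h := hP) uSL hSL).
- by rewrite UglE hg hJ; exact: unitri_Mn.
- by rewrite UglE Sv; exact: unitri_Mn.
- have h1 : (1 < k.+1)%N by exact: ltnW.
  have o0 : nat_of_ord (@ord0 k) = 0%N by [].
  apply/negP => /eqP /ffunP /(_ ord0); rewrite !ffunE o0 h1.
  rewrite hg hJ Sv !MnE (inordK h1) j01 s01 => /eqP.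
  by rewrite oner_eq0.
- apply: rtr_ne; apply/negP => /eqP /(matrix_rtr hg Sv); rewrite hJ !MnM.
  have h2 : (2 < k.+1)%N by [].
  move/(congr1 (fun A : 'M[F]_k.+1 => A ord0 (inord 2))); rewrite !MnE (inordK h2).
  rewrite (_ : nat_of_ord (@ord0 k) = 0%N) // e3 e1.
  move/eqP; rewrite -subr_eq0 -natrB //.
  by apply/negP; exact: two_neq0.
Qed.

End C1.

Section C3.
Local Open Scope ring_scope.

Definition jnl (lam : seq nat) (i j : nat) : nat :=
  (i == j) || ((j == i.+1) && (j \notin block_ends lam)).

Lemma jordanMn (F : fieldType) m lam : unip_jordan F m lam = Mn F m (jnl lam).
Proof.
apply/matrixP => i j; rewrite !mxE /jnl.
case: (eqVneq i j) => [->|ne]; first by rewrite !eqxx.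
have ne' : (i == j :> nat) = false by rewrite val_eqE (negbTE ne).
rewrite ne' ?(negbTE ne) /=.
by case: (_ && _).
Qed.

Definition o3 (k : nat) (H : (k < 3)%N) : 'I_3 := Ordinal H.
Definition sig3 : 'S_3 := (tperm (@o3 1 isT) (@o3 2 isT) * tperm (@o3 0 isT) (@o3 1 isT))%g.

Lemma sig3E (i : 'I_3) : (sig3 i : nat) = nth 0%N [:: 1; 2; 0]%N i.
Proof.
rewrite permM !permE /=.
by case: i => [[|[|[|?]]] Hi].
Qed.

Definition pn3 (i j : nat) : nat := nth 0%N [:: 1; 2; 0]%N i == j.
Definition sn3 (i j : nat) : nat := (i == j) || ((i == 1) && (j == 2))%N.

Definition hP3 (F : finFieldType) : {'GL_3[F]} := @FinRing.Unit _ (perm_mx sig3) (@unitmx_perm F 3 sig3).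

Lemma hP3v (F : finFieldType) : GLval (hP3 F) = Mn F 3 pn3.
Proof.
apply/matrixP => i j; rewrite /= /perm_mx !mxE /pn3 -sig3E.
by [].
Qed.

Lemma hP3SL (F : finFieldType) : hP3 F \in SL 3 F.
Proof. by rewrite inE /= det_perm odd_permM !odd_tperm /= expr0. Qed.

End C3.

Section C5.
Local Open Scope ring_scope.

Definition o4 (k : nat) (H : (k < 4)%N) : 'I_4 := Ordinal H.
Definition sig4 : 'S_4 := (tperm (@o4 1 isT) (@o4 2 isT) * tperm (@o4 0 isT) (@o4 1 isT))%g.

Lemma sig4E (i : 'I_4) : (sig4 i : nat) = nth 0%N [:: 1; 2; 0; 3]%N i.
Proof.
rewrite permM !permE /=.
by case: i => [[|[|[|[|?]]]] Hi].
Qed.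

Definition pn4 (i j : nat) : nat := nth 0%N [:: 1; 2; 0; 3]%N i == j.
Definition sn4 (i j : nat) : nat := [|| i == j, (i == 1) && (j == 2) | (i == 0) && (j == 3)]%N.

Definition hP4 (F : finFieldType) : {'GL_4[F]} := @FinRing.Unit _ (perm_mx sig4) (@unitmx_perm F 4 sig4).

Lemma hP4v (F : finFieldType) : GLval (hP4 F) = Mn F 4 pn4.
Proof.
apply/matrixP => i j; rewrite /= /perm_mx !mxE /pn4 -sig4E.
by [].
Qed.

Lemma hP4SL (F : finFieldType) : hP4 F \in SL 4 F.
Proof. by rewrite inE /= det_perm odd_permM !odd_tperm /= expr0. Qed.

Lemma case4 (F : finFieldType) (u g : {'GL_4[F]}) :
  odd #|F| -> u \in SL 4 F ->
  GLval (g * u * g^-1)%g = unip_jordan F 4 [:: 2; 2]%N -> typeD (u ^: SL 4 F)%g.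
Proof.
move=> oF uSL hg.
apply: (caseGen (hP := hP4 F) (pn := pn4) (sn := sn4) oF uSL (hP4SL F) hg (jordanMn _ _ _) (hP4v F)).
all: by vm_compute.
Qed.

End C5.

Section C4.

Lemma case3 (F : finFieldType) (u g : {'GL_3[F]}) :
  odd #|F| -> u \in SL 3 F ->
  GLval (g * u * g^-1)%g = unip_jordan F 3 [:: 2; 1]%N -> typeD (u ^: SL 3 F)%g.
Proof.
move=> oF uSL hg.
apply: (caseGen (hP := hP3 F) (pn := pn3) (sn := sn3) oF uSL (hP3SL F) hg (jordanMn _ _ _) (hP3v F)).
all: by vm_compute.
Qed.

End C4.

Local Close Scope group_scope.

Theorem mainTheorem10 (F : finFieldType) (n : nat) (u : {'GL_n[F]}) :
  odd #|F| ->
  u \in SL n F ->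
  (n = 4 /\ unip_type u [:: 2; 2]) \/ (n = 3 /\ unip_type u [:: 2; 1]) ->
  typeD (u ^: SL n F)%g.
Proof.
move=> oF uSL [[en [_ _ [g hg]]] | [en [_ _ [g hg]]]]; subst n.
- exact: (case4 oF uSL hg).
- exact: (case3 oF uSL hg).
Qed.
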